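(* Let $A\in\mathcal A_n$, let $T=\tau(A)$, and fix an integer $g\ge0$. Then $\operatorname{gldim}(A)\le g$ if and only if there are no two siblings $i<j$ in $T$ such that the subtree rooted at $i$ has depth at least $\lfloor g/2\rfloor$ and the subtree rooted at $j$ has depth at least $\lceil g/2\rceil$.
   Context: $\mathcal A_n$ is the set of ordered products $A=A_1\times\cdots\times A_k$ of connected linear Nakayama algebras (over an algebraically closed field) with $n$ simple modules in total; its Kupisch series $[c_0,\dots,c_{n-1}]$ is the concatenation of those of the factors, where a connected linear Nakayama algebra with $m$ simple modules has Kupisch series $[c_0,\dots,c_{m-1}]$, $c_i=\dim e_iA$, characterized by $c_{i+1}+1\ge c_i\ge2$ for $0\le i<m-1$ and $c_{m-1}=1$. The global dimension of $A$ is the maximum of those of its factors. $\tau(A)$ is the tree on $\{0,\dots,n\}$, rooted at $n$, in which the parent of $i$ is $i+c_i$ for $0\le i<n$. Siblings are distinct vertices with the same parent, compared by their labels. The depth of a subtree rooted at a vertex $v$ is the maximal number of edges on a path from $v$ down to a descendant of $v$. *)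

(* Defs.v *)
From mathcomp Require Import all_boot.
Set Implicit Arguments. Unset Strict Implicit. Unset Printing Implicit Defensive.

(* A connected linear Nakayama algebra with m simple modules, given by its
   Kupisch series c = [c_0, ..., c_{m-1}], c_i = dim e_i A. *)
Definition connected_kupisch (c : seq nat) : Prop :=
  let m := size c in
  0 < m /\
  (forall i, i.+1 < m -> 2 <= nth 0 c i /\ nth 0 c i <= (nth 0 c i.+1).+1) /\
  nth 0 c m.-1 = 1.

(* An element of \mathcal A_n: an ordered list of connected linear Nakayama
   algebras (given by their Kupisch series) with n simples in total. *)
Definition in_An (n : nat) (A : seq (seq nat)) : Prop :=
  (forall c, c \in A -> connected_kupisch c) /\ sumn (map size A) = n.

(* Kupisch series of the product: concatenation. *)
Definition kupisch (A : seq (seq nat)) : seq nat := flatten A.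

(* Projective dimension of the indecomposable (uniserial) module M(i,k) with
   top S_i and length k (1 <= k <= c_i) over the Nakayama algebra with
   Kupisch series c, computed through minimal projective resolutions:
   M(i,k) is projective iff k = c_i, otherwise its first syzygy is
   M(i+k, c_i - k).  [fuel] bounds the recursion (indices strictly increase,
   so fuel = size c suffices). *)
Fixpoint pdim_fuel (c : seq nat) (fuel i k : nat) : nat :=
  if fuel is f.+1 then
    if k == nth 0 c i then 0 else (pdim_fuel c f (i + k) (nth 0 c i - k)).+1
  else 0.

(* Global dimension of a connected linear Nakayama algebra:
   the maximum of the projective dimensions of the simple modules S_i = M(i,1). *)
Definition gldim_conn (c : seq nat) : nat :=
  \max_(i < size c) pdim_fuel c (size c) i 1.

Definition gldim (A : seq (seq nat)) : nat := \max_(c <- A) gldim_conn c.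

(* The tree tau(A) on {0,...,n}, rooted at n, with parent i + c_i for i < n. *)
Definition tparent (c : seq nat) (i : nat) : nat :=
  if i < size c then i + nth 0 c i else i.

(* u = v_0, v_1 = parent v_0, ..., v_k = v is a downward path of k edges
   from v to its descendant u (each v_t, t < k, is a non-root vertex). *)
Definition down_path (c : seq nat) (u v k : nat) : bool :=
  (u <= size c) && (iter k (tparent c) u == v) &&
  [forall t : 'I_k, iter t (tparent c) u < size c].

(* Depth of the subtree rooted at v: the maximal number of edges on a path
   from v down to a descendant of v.  Paths have at most n edges. *)
Definition depth (c : seq nat) (v : nat) : nat :=
  \max_(u < (size c).+1) \max_(k < (size c).+1 | down_path c u v k) k.

(* Siblings: distinct vertices with the same parent (the root n has no parent). *)
Definition siblings (c : seq nat) (i j : nat) : Prop :=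
  i != j /\ i < size c /\ j < size c /\ tparent c i = tparent c j.

(* Main.v *)
Require Import Defs.
From mathcomp Require Import all_boot.
From mathcomp Require Import zify.
Set Implicit Arguments. Unset Strict Implicit. Unset Printing Implicit Defensive.

Definition pgood (C : seq nat) : Prop :=
  (forall i j, i <= j -> tparent C i <= tparent C j) /\
  (forall i, i < size C -> i < tparent C i <= size C).

Lemma tparent_fix C i : size C <= i -> tparent C i = i.
Proof. by rewrite /tparent leqNgt => /negbTE ->. Qed.

Lemma tparent_lt C i : i < tparent C i -> i < size C.
Proof. by rewrite /tparent; case: ifP => //; rewrite ltnn. Qed.

Lemma tparent_cat c D i : tparent (c ++ D) i =
  if i < size c then tparent c i else size c + tparent D (i - size c).
Proof.
rewrite /tparent size_cat nth_cat.
case: (ltnP i (size c)) => H.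
  by rewrite (leq_trans H (leq_addr _ _)).
case: ifP => H2; case: ifP => H3 //; try lia.
Qed.

Lemma pgood_nil : pgood [::].
Proof. split => [i j|i] //=; by rewrite /tparent. Qed.

Lemma pgood_cat c D : pgood c -> pgood D -> pgood (c ++ D).
Proof.
move=> [m1 b1] [m2 b2]; split => [i j ij|i].
  rewrite !tparent_cat.
  case: (ltnP i (size c)) => Hi; case: (ltnP j (size c)) => Hj.
  - exact: m1.
  - have := b1 i Hi; lia.
  - lia.
  - have := m2 (i - size c) (j - size c); lia.
rewrite tparent_cat size_cat => H.
case: (ltnP i (size c)) => Hi.
  have := b1 i Hi; lia.
have := b2 (i - size c); lia.
Qed.

Lemma pgood_conn c : connected_kupisch c -> pgood c.
Proof.
move=> [m0 [Hs Hl]].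
have step : forall i, tparent c i <= tparent c i.+1.
  move=> i; rewrite /tparent.
  case: (ltnP i.+1 (size c)) => H.
    have := Hs i H; rewrite (ltnW H); lia.
  case: ifP => H2 //.
  have E : i = (size c).-1 by lia.
  rewrite -E in Hl; rewrite Hl; lia.
have mono : forall i j, i <= j -> tparent c i <= tparent c j.
  exact: (homo_leq (r := leq) leqnn leq_trans step).
split => // i Hi; apply/andP; split.
  rewrite /tparent Hi.
  case: (ltnP i.+1 (size c)) => H.
    have := Hs i H; lia.
  have E : i = (size c).-1 by lia.
  rewrite -E in Hl; rewrite Hl; lia.
have := mono i (size c) (ltnW Hi); rewrite (tparent_fix (leqnn _)) //.
Qed.

Lemma pgood_flat A : (forall c, c \in A -> connected_kupisch c) -> pgood (flatten A).
Proof.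
elim: A => [|c A IH] H /=; first exact: pgood_nil.
apply: pgood_cat; first by apply: pgood_conn; apply: H; rewrite inE eqxx.
by apply: IH => d Hd; apply: H; rewrite inE Hd orbT.
Qed.

Definition cond (C : seq nat) (a e : nat) : bool := (a < e) && (e < tparent C a).

Fixpoint good (C : seq nat) (t a e : nat) : bool :=
  cond C a e && (if t is t'.+1 then good C t' e (tparent C a) else true).

Lemma good_cond C t a e : good C t a e -> cond C a e.
Proof. by case: t => [|t] /= /andP []. Qed.

Lemma pdS C f a e : a < e < tparent C a ->
  pdim_fuel C f.+1 a (e - a) = (pdim_fuel C f e (tparent C a - e)).+1.
Proof.
move=> /andP [H1 H2].
have Ha : a < size C by apply: tparent_lt; lia.
move: H2; rewrite /tparent Ha => H2 /=.
have -> : (e - a == nth 0 C a) = false by apply/eqP; lia.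
have -> : a + (e - a) = e by lia.
by have -> : nth 0 C a - (e - a) = a + nth 0 C a - e by lia.
Qed.

Lemma L2 C t f a e : good C t a e -> t < f -> t < pdim_fuel C f a (e - a).
Proof.
elim: t f a e => [|t IH] [|f] a e Hg0 Htf //; case/andP: Hg0 => Hc Hg.
  by rewrite pdS.
rewrite pdS // ltnS; exact: IH.
Qed.

Lemma L1 C t f a e : pgood C -> t < pdim_fuel C f a (e - a) ->
  a < e <= tparent C a -> good C t a e.
Proof.
move=> [mono bnd].
elim: t f a e => [|t IH] [|f] a e //= Hp /andP [H1 H2].
- case: eqP Hp => // Hne _.
  have Ha : a < size C by apply: tparent_lt; lia.
  move: H2 Hne; rewrite /cond /tparent Ha => H2 Hne; apply/andP; split=> //; lia.
- case: eqP Hp => // Hne Hp.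
  have Ha : a < size C by apply: tparent_lt; lia.
  have He : e < tparent C a by move: H2 Hne; rewrite /tparent Ha => H2 Hne; lia.
  apply/andP; split; first by rewrite /cond H1 He.
  apply: (IH f); last by rewrite He mono // ltnW.
  move: Hp; rewrite /tparent Ha.
  have -> : a + (e - a) = e by lia.
  by have -> : nth 0 C a - (e - a) = a + nth 0 C a - e by lia.
Qed.

Lemma good_bound C t a e : pgood C -> good C t a e -> e + t < size C.
Proof.
move=> [mono bnd].
elim: t a e => [|t IH] a e /= /andP [/andP [H1 H2] Hg].
  have Ha := tparent_lt (leq_trans H1 (ltnW H2)).
  have := bnd a Ha; lia.
have := IH _ _ Hg; lia.
Qed.

Lemma good_shift C c o t a e : pgood c ->
  (forall v, v < size c -> tparent C (o + v) = o + tparent c v) ->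
  good c t a e -> good C t (o + a) (o + e).
Proof.
move=> pc Hs; elim: t a e => [|t IH] a e /= /andP [/andP [H1 H2] Hg].
  have Ha := tparent_lt (leq_trans H1 (ltnW H2)).
  by rewrite /cond Hs // ltn_add2l H1 ltn_add2l H2.
have Ha := tparent_lt (leq_trans H1 (ltnW H2)).
by rewrite /cond Hs // ltn_add2l H1 ltn_add2l H2 IH.
Qed.

Lemma good_unshift C c o t a e : pgood c ->
  (forall v, v < size c -> tparent C (o + v) = o + tparent c v) ->
  a < size c -> good C t (o + a) (o + e) -> good c t a e.
Proof.
move=> [mono bnd] Hs; elim: t a e => [|t IH] a e Ha /=; rewrite /cond Hs // !ltn_add2l.
  by rewrite andbT.
move=> /andP [/andP [H1 H2] Hg]; rewrite H1 H2 /=.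
apply: IH => //.
have := bnd a Ha; lia.
Qed.

Definition Pd (C : seq nat) (v k : nat) : Prop :=
  exists u j, k <= j /\ down_path C u v j.

Lemma dpE C u v j : down_path C u v j <->
  [/\ u <= size C, iter j (tparent C) u = v & forall t, t < j -> iter t (tparent C) u < size C].
Proof.
rewrite /down_path; split.
  case/andP => /andP [H1 /eqP H2] /forallP H3; split => // t Ht.
  exact: (H3 (Ordinal Ht)).
case=> H1 H2 H3; rewrite H1 H2 eqxx /=; apply/forallP => t; exact: H3.
Qed.

Lemma Pd0 C v : v <= size C -> Pd C v 0.
Proof. move=> H; exists v, 0; split => //; apply/dpE; split => //. Qed.

Lemma Pd_weak C v k k' : Pd C v k -> k' <= k -> Pd C v k'.
Proof. move=> [u [j [H1 H2]]] H; exists u, j; split => //; exact: leq_trans H H1. Qed.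

Lemma Pd_ext C v k : v < size C -> Pd C v k -> Pd C (tparent C v) k.+1.
Proof.
move=> Hv [u [j [H1 /dpE [H2 H3 H4]]]]; exists u, j.+1; split => //.
apply/dpE; split => //=; first by rewrite H3.
move=> t Ht; case: (ltnP t j) => Htj; first exact: H4.
have -> : t = j by lia.
by rewrite H3.
Qed.

Lemma iter_mono C k u v : pgood C -> u <= v -> iter k (tparent C) u <= iter k (tparent C) v.
Proof. move=> [mono _] H; elim: k => //= k IH; exact: mono. Qed.

Lemma iter_fix C k u : size C <= u -> iter k (tparent C) u = u.
Proof. move=> H; elim: k => //= k ->; exact: tparent_fix. Qed.

Lemma Pd_iter C v k : Pd C v k -> exists w, iter k (tparent C) w = v.
Proof.
move=> [u [j [H1 /dpE [H2 H3 H4]]]]; exists (iter (j - k) (tparent C) u).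
by rewrite -iterD subnKC.
Qed.

Lemma iter_le C u v : pgood C -> v <= size C -> iter u (tparent C) v <= size C.
Proof.
move=> [mono bnd] Hv; elim: u => //= u IH.
case: (ltnP (iter u (tparent C) v) (size C)) => H.
  by case/andP: (bnd _ H).
by rewrite tparent_fix.
Qed.

Lemma path_len C u j : pgood C -> (forall t, t < j -> iter t (tparent C) u < size C) ->
  u + j <= iter j (tparent C) u.
Proof.
move=> [mono bnd]; elim: j => [|j IH] H /=; first by rewrite addn0.
have Hj := H j (ltnSn j).
have := IH (fun t Ht => H t (ltnW Ht)).
case/andP: (bnd _ Hj); lia.
Qed.

Lemma depth_ge C v k : pgood C -> Pd C v k -> k <= depth C v.
Proof.
move=> pg [u [j [H1 Hd]]].
have /dpE [H2 H3 H4] := Hd.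
have Hj : j <= size C.
  have := path_len pg H4; have := iter_le j pg H2; lia.
apply: (leq_trans H1).
rewrite /depth.
have Hu : u < (size C).+1 by [].
have Hj' : j < (size C).+1 by [].
apply: (bigmax_sup (Ordinal Hu)) => //=.
apply: (bigmax_sup (Ordinal Hj')) => //=.
Qed.

Lemma depth_Pd C v k : v <= size C -> k <= depth C v -> Pd C v k.
Proof.
move=> Hv; case: k => [|k]; first by move=> _; exact: Pd0.
rewrite /depth => H.
case: (boolP [exists u : 'I_(size C).+1, exists j : 'I_(size C).+1,
           down_path C u v j && (k < j)]).
  case/existsP => u /existsP [j /andP [Hd Hk]].
  by exists u, j; split.
rewrite negb_exists => /forallP Hn.
have : \max_(u < (size C).+1) \max_(k0 < (size C).+1 | down_path C u v k0) k0 <= k.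
  apply/bigmax_leqP => u _; apply/bigmax_leqP => j Hd.
  move: (Hn u); rewrite negb_exists => /forallP /(_ j); rewrite negb_and Hd /=; lia.
lia.
Qed.

Lemma Fp C d t0 a e : pgood C -> size C - e <= d -> cond C a e ->
  Pd C a t0./2 -> Pd C e t0.+1./2 ->
  exists a' b', [/\ a' < b', siblings C a' b', Pd C a' t0./2 & Pd C b' t0.+1./2].
Proof.
move=> pg; have [mono bnd] := pg.
elim: d t0 a e => [|d IH] t0 a e Hd /andP [H1 H2] Pa Pe.
  have Ha := tparent_lt (leq_trans H1 (ltnW H2)).
  have := bnd a Ha; lia.
have Ha := tparent_lt (leq_trans H1 (ltnW H2)).
have := bnd a Ha => /andP [_ HaN].
have HeN : e < size C by lia.
case: (eqVneq (tparent C e) (tparent C a)) => Heq.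
  exists a, e; split => //; split; [by rewrite neq_ltn H1 | by []].
have Hlt : tparent C a < tparent C e.
  by rewrite ltn_neqAle eq_sym Heq mono // ltnW.
have [a' [b' [Hab Hs Pa' Pb']]] := IH t0.+1 e (tparent C a) ltac:(lia)
   ltac:(by rewrite /cond H2 Hlt) Pe (Pd_ext Ha Pa).
exists a', b'; split => //.
  apply: Pd_weak Pa' _; lia.
apply: Pd_weak Pb' _; rewrite /=; lia.
Qed.

Lemma Fl C t t0 a e : pgood C -> good C t a e ->
  Pd C a t0./2 -> Pd C e t0.+1./2 ->
  exists a' b', [/\ a' < b', siblings C a' b', Pd C a' (t0 + t)./2 & Pd C b' (t0 + t).+1./2].
Proof.
move=> pg; elim: t t0 a e => [|t IH] t0 a e.
  move=> /= /andP [Hc _] Pa Pe; rewrite addn0.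
  exact: (Fp (d := size C) pg (leq_subr _ _) Hc Pa Pe).
move=> /= /andP [/andP [H1 H2] Hg] Pa Pe.
have Ha := tparent_lt (leq_trans H1 (ltnW H2)).
rewrite -addSnnS; exact: (IH t0.+1 _ _ Hg Pe (Pd_ext Ha Pa)).
Qed.

Definition stepp (C : seq nat) (x : nat * nat) := (x.2, tparent C x.1).

Definition X (C : seq nat) a e t :=
  if odd t then iter t./2 (tparent C) e else iter t./2 (tparent C) a.

Lemma X2 C a e t : X C a e t.+2 = tparent C (X C a e t).
Proof. by rewrite /X /= negbK; case: (odd t). Qed.

Lemma iter_stepp C a e t : iter t (stepp C) (a, e) = (X C a e t, X C a e t.+1).
Proof. elim: t => [|t IH] //=; by rewrite IH /stepp /= X2. Qed.

Lemma good_of_last C t a e : pgood C -> a <= e <= tparent C a ->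
  cond C (iter t (stepp C) (a, e)).1 (iter t (stepp C) (a, e)).2 -> good C t a e.
Proof.
move=> [mono bnd]; elim: t a e => [|t IH] a e /andP [H1 H2] Hc.
  by rewrite /= andbT.
rewrite iterSr in Hc; rewrite /=.
have Hg : good C t e (tparent C a).
  apply: IH; last exact: Hc.
  by rewrite H2 mono.
rewrite Hg andbT.
have := good_cond Hg; rewrite /cond => /andP [H3 H4].
rewrite H3 andbT ltn_neqAle H1 andbT.
by apply/eqP => E; move: H4; rewrite E ltnn.
Qed.

Lemma boundary (Q : pred nat) k lo : Q lo -> ~~ Q (lo + k) ->
  exists i, [/\ lo <= i, i < lo + k, Q i & ~~ Q i.+1].
Proof.
elim: k => [|k IH] Hlo Hn; first by rewrite addn0 Hlo in Hn.
case: (boolP (Q (lo + k))) => Hk.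
  exists (lo + k); split => //; [lia | lia | by rewrite -addnS].
have [i [H1 H2 H3 H4]] := IH Hlo Hk; exists i; split => //; lia.
Qed.

Lemma Gl C g a b : pgood C -> a < b -> siblings C a b ->
  Pd C a g./2 -> Pd C b g.+1./2 -> exists i, i < size C /\ good C g i i.+1.
Proof.
move=> pg Hab [_ [HaN [HbN Hp]]] Pa Pb.
have [mono bnd] := pg.
have Hbp : b < tparent C a by rewrite Hp; case/andP: (bnd b HbN).
have HpN : tparent C a <= size C by case/andP: (bnd a HaN).
have fin : forall i, i <= i.+1 <= tparent C i -> cond C (iter g (stepp C) (i, i.+1)).1
                 (iter g (stepp C) (i, i.+1)).2 -> exists i, i < size C /\ good C g i i.+1.
  move=> i Hi Hc; exists i; split; last exact: good_of_last.
  apply: tparent_lt; lia.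
have [s [Eg|Eg]] : exists s, g = s.*2.+1 \/ g = s.*2.
  exists g./2; have := odd_double_half g; case: (odd g) => /= E; [left|right]; lia.
-
  subst g.
  have h1 : (s.*2.+1)./2 = s by exact: uphalf_double.
  have h2 : (s.*2.+2)./2 = s.+1 by exact: (congr1 S (half_double s)).
  rewrite h1 in Pa; rewrite h2 in Pb.
  have [wa Hwa] := Pd_iter Pa; have [wb Hwb] := Pd_iter Pb.
  pose Q := fun u => iter s.+1 (tparent C) u < tparent C a.
  have Qb : Q wb by rewrite /Q Hwb.
  have Qa : ~~ Q wa by rewrite /Q /= Hwa ltnn.
  have Hw : wb <= wa.
    rewrite leqNgt; apply/negP => H.
    move: Qa; rewrite /Q; have := iter_mono s.+1 pg (ltnW H); move: Qb; rewrite /Q; lia.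
  have [i [H1 H2 H3 H4]] := boundary (k := wa - wb) Qb ltac:(by rewrite subnKC).
  have HiN : i < size C.
    rewrite ltnNge; apply/negP => H; move: H3; rewrite /Q iter_fix //; lia.
  apply: (fin i).
    rewrite leqnSn /=; by case/andP: (bnd i HiN).
  rewrite iter_stepp /X /= odd_double /= uphalf_double half_double.
  move: H3 H4; rewrite /Q /= -/(iter s.+1 _ _) => H3 H4.
  have m1 := iter_mono s pg (ltac:(lia) : i.+1 <= wa).
  have m2 := iter_mono s.+1 pg H1.
  rewrite Hwb in m2; rewrite Hwa in m1.
  apply/andP; split; lia.
-
  subst g.
  have h1 : (s.*2.+1)./2 = s by exact: uphalf_double.
  rewrite half_double in Pa; rewrite h1 in Pb.
  have [wa Hwa] := Pd_iter Pa; have [wb Hwb] := Pd_iter Pb.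
  pose Q := fun u => iter s (tparent C) u <= a.
  have Qa : Q wa by rewrite /Q Hwa.
  have Qb : ~~ Q wb by rewrite /Q Hwb -ltnNge.
  have Hw : wa <= wb.
    rewrite leqNgt; apply/negP => H.
    move: Qb; rewrite /Q; have := iter_mono s pg (ltnW H); move: Qa; rewrite /Q; lia.
  have [i [H1 H2 H3 H4]] := boundary (k := wb - wa) Qa ltac:(by rewrite subnKC).
  have m1 := iter_mono s pg H1.
  have m2 := iter_mono s pg (ltac:(lia) : i.+1 <= wb).
  rewrite Hwa in m1; rewrite Hwb in m2.
  have HiN : i < size C.
    rewrite ltnNge; apply/negP => H; move: H3 m1; rewrite /Q iter_fix //; lia.
  apply: (fin i).
    rewrite leqnSn /=; by case/andP: (bnd i HiN).
  rewrite iter_stepp /X /= odd_double /= uphalf_double half_double.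
  move: H3 H4; rewrite /Q => H3 H4.
  have E2 : iter s (tparent C) i = a by lia.
  rewrite E2; apply/andP; split; lia.
Qed.

Lemma find_comp (A : seq (seq nat)) i : i < size (flatten A) ->
  exists A1 c A2, A = A1 ++ c :: A2 /\ size (flatten A1) <= i < size (flatten A1) + size c.
Proof.
elim: A i => [|c A IH] i //=; rewrite size_cat => Hi.
case: (ltnP i (size c)) => H.
  by exists [::], c, A; split => //=.
have [A1 [c' [A2 [E H2]]]] := IH (i - size c) ltac:(lia).
exists (c :: A1), c', A2; split; first by rewrite E.
rewrite /= size_cat; lia.
Qed.

Lemma split_in (A : seq (seq nat)) c : c \in A -> exists A1 A2, A = A1 ++ c :: A2.
Proof.
elim: A => [|d A IH] //; rewrite inE => /orP [/eqP ->|H].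
  by exists [::], A.
have [A1 [A2 ->]] := IH H; by exists (d :: A1), A2.
Qed.

Lemma comp_shift (A1 : seq (seq nat)) c A2 v : v < size c ->
  tparent (flatten (A1 ++ c :: A2)) (size (flatten A1) + v) = size (flatten A1) + tparent c v.
Proof.
move=> Hv; rewrite flatten_cat /= tparent_cat ltnNge leq_addr /= tparent_cat.
by rewrite addKn Hv.
Qed.

Lemma gl_ge A c i g : c \in A -> g < pdim_fuel c (size c) i 1 -> i < size c -> g < gldim A.
Proof.
move=> cA Hp Hi; rewrite /gldim.
apply: (leq_trans _ (leq_bigmax_seq _ cA is_true_true)).
rewrite /gldim_conn; apply: (leq_trans Hp).
exact: (@leq_bigmax _ (fun i0 : 'I_(size c) => pdim_fuel c (size c) i0 1) (Ordinal Hi)).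
Qed.

Lemma gl_lt A g : g < gldim A -> exists c, c \in A /\ exists i, i < size c /\ g < pdim_fuel c (size c) i 1.
Proof.
move=> H.
case: (boolP [exists c : seq_sub A, [exists i : 'I_(size (val c)), g < pdim_fuel (val c) (size (val c)) i 1]]).
  case/existsP => c /existsP [i Hi]; exists (val c); split; first exact: valP.
  by exists i.
rewrite negb_exists => /forallP Hn.
suff : gldim A <= g by lia.
apply/bigmax_leqP_seq => c cA _.
rewrite /gldim_conn; apply/bigmax_leqP => i _.
have := Hn (SeqSub cA); rewrite negb_exists => /forallP /(_ i) /=; lia.
Qed.

Theorem lemma3p9 (n : nat) (A : seq (seq nat)) (g : nat) :
  in_An n A ->
  (gldim A <= g <->
   ~ (exists i j : nat,
        [/\ i < j, siblings (kupisch A) i j,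
            g %/ 2 <= depth (kupisch A) i
          & (g + 1) %/ 2 <= depth (kupisch A) j])).
Proof.
move=> [Hc _].
have pg : pgood (kupisch A) by apply: pgood_flat.
split.
- move=> Hg [i [j [Hij Hs Hdi Hdj]]].
  have [_ [HiN [HjN _]]] := Hs.
  rewrite divn2 in Hdi; rewrite addn1 divn2 in Hdj.
  have Pi := depth_Pd (ltnW HiN) Hdi.
  have Pj := depth_Pd (ltnW HjN) Hdj.
  have [i0 [Hi0 Hgood]] := Gl pg Hij Hs Pi Pj.
  have [A1 [c [A2 [EA /andP [Ho1 Ho2]]]]] := find_comp Hi0.
  set o := size (flatten A1) in Ho1 Ho2.
  have cA : c \in A by rewrite EA mem_cat inE eqxx orbT.
  have pc : pgood c by apply: pgood_conn; apply: Hc.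
  have Hsh : forall v, v < size c -> tparent (kupisch A) (o + v) = o + tparent c v.
    by move=> v Hv; rewrite /kupisch EA comp_shift.
  have Ei : i0 = o + (i0 - o) by lia.
  have Ei1 : i0.+1 = o + (i0 - o).+1 by lia.
  rewrite Ei1 {1}Ei in Hgood.
  have Hgc := good_unshift (a := i0 - o) pc Hsh ltac:(lia) Hgood.
  have Hb := good_bound pc Hgc.
  have := L2 (f := size c) Hgc ltac:(lia).
  rewrite subSnn => Hp.
  have := gl_ge cA Hp ltac:(lia); lia.
- move=> Hno; rewrite leqNgt; apply/negP => Hg; apply: Hno.
  have [c [cA [i [Hi Hp]]]] := gl_lt Hg.
  have [A1 [A2 EA]] := split_in cA.
  have pc : pgood c by apply: pgood_conn; apply: Hc.
  set o := size (flatten A1).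
  have Hsh : forall v, v < size c -> tparent (kupisch A) (o + v) = o + tparent c v.
    by move=> v Hv; rewrite /kupisch EA comp_shift.
  have Hgc : good c g i i.+1.
    apply: (L1 (f := size c)) => //; first by rewrite subSnn.
    rewrite ltnSn /=; have [_ bnd] := pc; by case/andP: (bnd i Hi).
  have HgC := good_shift pc Hsh Hgc; rewrite addnS in HgC.
  have HoN : o + i < size (kupisch A).
    rewrite /o /kupisch EA flatten_cat /= !size_cat ltn_add2l; exact: leq_trans Hi (leq_addr _ _).
  have [a [b [Hab Hs Pa Pb]]] := Fl (t0 := 0) pg HgC (Pd0 (ltnW HoN)) (Pd0 HoN).
  exists a, b; split => //.
    by rewrite divn2; apply: depth_ge.
  by rewrite addn1 divn2; apply: depth_ge.
Qed.
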